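(* Let $G$ be a strongly regular graph with parameters $(n,d,\lambda,\mu)$. If $\mathcal{P}_n,\mathcal{P}_{n-1},\dots,\mathcal{P}_k$ is a partial contraction sequence of $G$ of width at most $\operatorname{lb}_1(G)$, then $|P|\leq 2$ for every part $P\in\mathcal{P}_i$, for every $i$ with $k\leq i$ and $i\geq n-\lceil \operatorname{lb}_1(G)/2\rceil$.
   Context: All graphs are finite and simple. A graph of order $n$ is strongly regular with parameters $(n,d,\lambda,\mu)$ if it is $d$-regular and any two distinct adjacent vertices have exactly $\lambda$ common neighbors and any two distinct non-adjacent vertices have exactly $\mu$ common neighbors. For a partition $\mathcal{P}$ of $V(G)$, the quotient trigraph $G/\mathcal{P}$ has vertex set $\mathcal{P}$; two distinct parts $U,W$ are joined by a black edge if every pair $\{u,w\}$ with $u\in U,w\in W$ is an edge of $G$, are non-adjacent if no such pair is an edge, and are joined by a red edge otherwise; the red degree of a part is its number of incident red edges. A partial contraction sequence is a sequence $\mathcal{P}_n,\dots,\mathcal{P}_k$ of partitions of $V(G)$ where $\mathcal{P}_n$ is the partition into singletons and each $\mathcal{P}_i$ (which has $i$ parts) arises from $\mathcal{P}_{i+1}$ by merging two parts; its width is the maximum red degree over all $G/\mathcal{P}_i$. For $n\geq 2$, $\operatorname{lb}_1(G)$ is the minimum over all 2-element subsets $\{u,v\}\subseteq V(G)$ of the maximum red degree of $G/\mathcal{P}$ where $\mathcal{P}$ has $\{u,v\}$ as its only non-singleton part. *)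

(* Defs.v *)
From mathcomp Require Import all_boot.
Set Implicit Arguments. Unset Strict Implicit. Unset Printing Implicit Defensive.

Definition simple_graph (T : finType) (e : rel T) : Prop :=
  symmetric e /\ irreflexive e.

Definition strongly_regular (T : finType) (e : rel T) (n d lam mu : nat) : Prop :=
  [/\ #|T| = n,
      (forall x : T, #|[set y | e x y]| = d),
      (forall x y : T, x != y -> e x y -> #|[set z | e x z && e y z]| = lam)
    & (forall x y : T, x != y -> ~~ e x y -> #|[set z | e x z && e y z]| = mu)].

Definition red_edge (T : finType) (e : rel T) (U W : {set T}) : bool :=
  [&& U != W,
      [exists u in U, exists w in W, e u w]
    & [exists u in U, exists w in W, ~~ e u w]].

Definition red_deg (T : finType) (e : rel T) (P : {set {set T}}) (U : {set T}) : nat :=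
  #|[set W in P | red_edge e U W]|.

Definition max_red_deg (T : finType) (e : rel T) (P : {set {set T}}) : nat :=
  \max_(U in P) red_deg e P U.

Definition singletons (T : finType) : {set {set T}} := [set [set x] | x : T].

Definition pair_partition (T : finType) (u v : T) : {set {set T}} :=
  [set [set u; v]] :|: [set [set x] | x in [set: T] :\ u :\ v].

(* lb_1(G) (meaningful for #|T| >= 2; the default #|T| is only used when there is no pair) *)
Definition lb1 (T : finType) (e : rel T) : nat :=
  \big[minn/#|T|]_(p : T * T | p.1 != p.2) max_red_deg e (pair_partition p.1 p.2).

Definition merge_step (T : finType) (P Q : {set {set T}}) : Prop :=
  exists U W, [/\ U \in P, W \in P, U != W & Q = (P :\ U :\ W) :|: [set U :|: W]].

Definition partial_contraction_seq (T : finType) (Ps : nat -> {set {set T}}) (k : nat) : Prop :=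
  k <= #|T| /\ Ps #|T| = singletons T /\
  forall i, k <= i -> i < #|T| -> merge_step (Ps i.+1) (Ps i).

Definition width_le (T : finType) (e : rel T) (Ps : nat -> {set {set T}}) (k w : nat) : Prop :=
  forall i, k <= i -> i <= #|T| -> forall U, U \in Ps i -> red_deg e (Ps i) U <= w.

(* Main.v *)
Require Import Defs.
From mathcomp Require Import all_boot zify.
Set Implicit Arguments. Unset Strict Implicit. Unset Printing Implicit Defensive.

Lemma arith1 L o h q : o <= 1 -> o + (h + h) = L -> 3 <= L -> L <= maxn (q+q) 1 -> 2 * (o + h) <= q + q.
Proof. move=> *; lia. Qed.
Lemma arith2 D1 D2 D3 X m T i r L t I : D1+D2+D3+3 <= 2*X + 2*m -> m + X + I <= T + r + 1 -> I = i -> T - t <= i -> r <= L -> L <= 2*t -> 2*t <= D1 -> 2*t<=D2 -> 2*t<=D3 -> False.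
Proof. move=> *; lia. Qed.
Lemma arith3 m I T i t L o h : m + I <= T + 1 -> 2 < m -> I = i -> T - t <= i -> t = o + h -> o + (h + h) = L -> o <= 1 -> 3 <= L /\ L <= 2 * t.
Proof. move=> *; lia. Qed.

Section S.
Variable T : finType.

Lemma merge_partition (P : {set {set T}}) (U W : {set T}) :
  partition P [set: T] -> U \in P -> W \in P -> U != W ->
  partition ((P :\ U :\ W) :|: [set U :|: W]) [set: T] /\
  #|(P :\ U :\ W) :|: [set U :|: W]| = #|P|.-1.
Proof.
move=> hP hU hW hUW.
have tP := partition_trivIset hP.
have cP := cover_partition hP.
have n0 := partition_neq0 hP.
have dUW : [disjoint U & W] by move/trivIsetP: tP => /(_ U W hU hW hUW).
have dB : forall B, B \in P -> B != U -> B != W -> [disjoint U :|: W & B].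
  move=> B hB h1 h2; rewrite -setI_eq0 setIUl setU_eq0 !setI_eq0.
  move/trivIsetP: tP => tP.
  by rewrite (tP U B hU hB) 1?eq_sym // (tP W B hW hB) 1?eq_sym.
have notin : U :|: W \notin P :\ U :\ W.
  apply/negP => /setD1P [h1 /setD1P [h2 h3]].
  have := dB _ h3 h2 h1; rewrite -setI_eq0 setIid => /eqP h.
  have := n0 _ hU; apply/negP; rewrite negbK -subset0 -h; exact: subsetUl.
split; last first.
  rewrite setUC cardsU1 notin /=.
  rewrite (cardsD1 U P) hU (cardsD1 W (P :\ U)) !inE eq_sym hUW hW /=.
  by rewrite add1n.
apply/and3P; split.
- rewrite -cP; apply/eqP/setP => x; apply/bigcupP/bigcupP.
  + case=> B; rewrite !inE => /orP [/andP [_ /andP [_ hB]] | /eqP ->] hx.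
      by exists B.
    by move: hx; rewrite inE => /orP [hx|hx]; [exists U | exists W].
  + case=> B hB hx.
    have [eB|h1] := eqVneq B U.
      subst B; exists (U :|: W); first by rewrite !inE eqxx orbT.
      by rewrite inE hx.
    have [eB|h2] := eqVneq B W.
      subst B; exists (U :|: W); first by rewrite !inE eqxx orbT.
      by rewrite inE hx orbT.
    by exists B => //; rewrite !inE h1 h2 hB.
- apply/trivIsetP => A B; rewrite !inE.
  move=> /orP [/andP [hA1 /andP [hA2 hA]] | /eqP ->] /orP [/andP [hB1 /andP [hB2 hB]] | /eqP ->].
  + by move/trivIsetP: tP; apply.
  + by move=> _; rewrite disjoint_sym; apply: dB.
  + by move=> _; apply: dB.
  + by rewrite eqxx.
- rewrite !inE negb_or; apply/andP; split; last first.
    rewrite eq_sym -card_gt0 (leq_trans _ (subset_leq_card (subsetUl U W))) //.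
    by rewrite card_gt0 n0.
  by apply/negP => /andP [_ /andP [_ h]]; move: (n0 _ h); rewrite eqxx.
Qed.

Lemma singletons_partition : partition (singletons T) [set: T] /\ #|singletons T| = #|T|.
Proof.
split; last by rewrite card_imset ?cardsT //; exact: set1_inj.
apply/and3P; split.
- apply/eqP/setP => x; rewrite inE; apply/bigcupP; exists [set x]; rewrite ?inE //.
  by apply/imsetP; exists x.
- apply/trivIsetP => A B /imsetP [x _ ->] /imsetP [y _ ->] hxy.
  rewrite disjoints1 inE; apply: contra hxy => /eqP ->; by [].
- apply/imsetP => [[x _ h]]; have : x \in (set0 : {set T}) by rewrite h inE.
  by rewrite inE.
Qed.
End S.

Section G.
Variable T : finType.
Variable e : rel T.
Hypothesis esym : symmetric e.
Hypothesis eirr : irreflexive e.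

Definition Delta (a b : T) := [set x | (x != a) && (x != b) && (e a x != e b x)].

Lemma sum_ind (A : {pred T}) : \sum_(x : T) nat_of_bool (x \in A) = #|A|.
Proof.
rewrite -sum1_card [in RHS]big_mkcond /=; apply: eq_bigr => x _; by case: (x \in A).
Qed.

Lemma Delta_card d a b : (forall x : T, #|[set y | e x y]| = d) ->
  #|Delta a b| = (d - #|[set y | e a y] :&: [set y | e b y]| - e a b) +
                 (d - #|[set y | e a y] :&: [set y | e b y]| - e a b).
Proof.
move=> hd.
set Na := [set y | e a y]; set Nb := [set y | e b y].
have -> : Delta a b = ((Na :\: Nb) :\ b) :|: ((Nb :\: Na) :\ a).
  apply/setP => x; rewrite !inE.
  have [->|xa] := eqVneq x a; first by rewrite eirr /= !andbF.
  have [->|xb] := eqVneq x b; first by rewrite eirr /= !andbF.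
  by case: (e a x); case: (e b x).
rewrite cardsU.
have -> : ((Na :\: Nb) :\ b) :&: ((Nb :\: Na) :\ a) = set0.
  by apply/setP => x; rewrite !inE; case: (e a x); case: (e b x); rewrite ?andbF.
rewrite cards0 subn0.
have h1 : #|(Na :\: Nb) :\ b| = #|Na :\: Nb| - e a b.
  rewrite (cardsD1 b (Na :\: Nb)) !inE eirr /=; case: (e a b) => /=; lia.
have h2 : #|(Nb :\: Na) :\ a| = #|Nb :\: Na| - e a b.
  rewrite (cardsD1 a (Nb :\: Na)) !inE eirr esym /=; case: (e a b) => /=; lia.
rewrite h1 h2 !cardsD hd /Na /Nb hd setIC.
done.
Qed.

Lemma Delta_even d a b : (forall x : T, #|[set y | e x y]| = d) ->
  exists q, #|Delta a b| = q + q.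
Proof. move=> hd; rewrite (Delta_card a b hd); eexists; reflexivity. Qed.

Lemma red_deg_pair a b : a != b ->
  red_deg e (pair_partition a b) [set a; b] <= #|Delta a b|.
Proof.
move=> ab.
rewrite /red_deg.
apply: (leq_trans _ (leq_imset_card (fun x => [set x]) (Delta a b))).
apply: subset_leq_card; apply/subsetP => W; rewrite inE => /andP [hW].
case/and3P => hne /existsP [u /andP [hu /existsP [w /andP [hw euw]]]]
  /existsP [u' /andP [hu' /existsP [w' /andP [hw' euw']]]].
move: hW; rewrite !inE => /orP [/eqP hW|]; first by rewrite hW eqxx in hne.
case/imsetP => x; rewrite !inE => /andP [xb /andP [xa _]] hW; subst W.
apply/imsetP; exists x => //.
move: hw hw'; rewrite !inE => /eqP ? /eqP ?; subst w w'.
rewrite xa xb /=.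
by move: euw euw'; case/set2P: hu => ->; case/set2P: hu' => ->; case: (e a x); case: (e b x).
Qed.

Lemma red_deg_single a b y : y != a -> y != b ->
  red_deg e (pair_partition a b) [set y] <= 1.
Proof.
move=> ya yb; rewrite /red_deg.
rewrite -(cards1 [set a; b]); apply: subset_leq_card; apply/subsetP => W.
rewrite !inE => /andP [hW].
case/and3P => hne /existsP [u /andP [hu /existsP [w /andP [hw euw]]]]
  /existsP [u' /andP [hu' /existsP [w' /andP [hw' euw']]]].
move: hW => /orP [//|].
case/imsetP => x _ hW; subst W.
move: hu hu' hw hw'; rewrite !inE => /eqP ? /eqP ? /eqP ? /eqP ?; subst.
by rewrite euw in euw'.
Qed.

Lemma bigmin_le (I : eqType) (r : seq I) (P : pred I) (F : I -> nat) x0 q :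
  q \in r -> P q -> \big[minn/x0]_(p <- r | P p) F p <= F q.
Proof.
elim: r => [//|y r IH]; rewrite inE big_cons => /orP [/eqP <-|hq] hP.
  by rewrite hP geq_minl.
case: (P y); last exact: IH.
by apply: (leq_trans (geq_minr _ _)); apply: IH.
Qed.

Lemma lb1_le a b : a != b -> lb1 e <= maxn #|Delta a b| 1.
Proof.
move=> ab.
have := @bigmin_le _ (index_enum (prod T T)) (fun p : T * T => p.1 != p.2)
  (fun p => max_red_deg e (pair_partition p.1 p.2)) #|T| (a, b) (mem_index_enum _) ab.
move=> /leq_trans; apply.
rewrite /max_red_deg; apply/bigmax_leqP => U.
rewrite !inE => /orP [/eqP -> | /imsetP [y]].
  by apply: (leq_trans (red_deg_pair ab)); apply: leq_maxl.
rewrite !inE => /andP [yb /andP [ya _]] ->.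
by apply: (leq_trans (red_deg_single ya yb)); apply: leq_maxr.
Qed.
End G.

Section G.
Variable T : finType.
Variable e : rel T.
Hypothesis esym : symmetric e.
Hypothesis eirr : irreflexive e.

Definition mixed (P : {set T}) a b c :=
  [set x | (x \notin P) && ([|| e a x, e b x | e c x] && ~~ [&& e a x, e b x & e c x])].

Lemma count1 (P : {set T}) a b c :
  a \in P -> b \in P -> c \in P -> a != b -> b != c -> a != c ->
  #|Delta e a b| + #|Delta e b c| + #|Delta e a c| + 3 <= 2 * #|mixed P a b c| + 2 * #|P|.
Proof.
move=> aP bP cP ab bc ac.
have s1 : forall y, \sum_(x : T) nat_of_bool (x == y) = 1.
  by move=> y; rewrite -(card1 y) -sum_ind; apply: eq_bigr => x _; rewrite inE.
have H : \sum_(x : T) ((x \in Delta e a b) + (x \in Delta e b c) + (x \in Delta e a c)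
     + ((x == a) + (x == b) + (x == c)))
   <= \sum_(x : T) (2 * (x \in mixed P a b c) + 2 * (x \in P)).
  apply: leq_sum => x _.
  rewrite !inE.
  have ba : b != a by rewrite eq_sym.
  have cb : c != b by rewrite eq_sym.
  have ca : c != a by rewrite eq_sym.
  have [->|xa] := eqVneq x a.
    by rewrite aP ?(negbTE ab) ?(negbTE ac) ?(negbTE ba) ?(negbTE ca) /=; case: (_ != _).
  have [->|xb] := eqVneq x b.
    by rewrite bP ?(negbTE ab) ?(negbTE bc) ?(negbTE ba) ?(negbTE cb) /=; case: (_ != _).
  have [->|xc] := eqVneq x c.
    by rewrite cP ?(negbTE cb) ?(negbTE ac) ?(negbTE bc) ?(negbTE ca) /=; case: (_ != _).
  rewrite /=; case: (x \in P); case: (e a x); case: (e b x); case: (e c x) => //.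
move: H; rewrite !big_split /= big1_eq !s1 !sum_ind; lia.
Qed.

Lemma count2 (Q : {set {set T}}) (P : {set T}) a b c :
  partition Q [set: T] -> P \in Q -> a \in P -> b \in P -> c \in P ->
  #|P| + #|mixed P a b c| + #|Q| <= #|T| + red_deg e Q P + 1 /\
  #|P| + #|Q| <= #|T| + 1.
Proof.
move=> hQ PQ aP bP cP.
set R := [set W in Q | red_edge e P W].
have n0 := partition_neq0 hQ.
have hT : #|T| = \sum_(W in Q) #|W| by rewrite -cardsT (card_partition hQ).
have hQc : #|Q| = \sum_(W in Q) 1 by rewrite sum1_card.
rewrite (bigD1 P) //= in hT; rewrite (bigD1 P) //= in hQc.
have ge1 : \sum_(W in Q | W != P) 1 <= \sum_(W in Q | W != P) #|W|.
  by apply: leq_sum => W /andP [hW _]; rewrite card_gt0 n0.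
split.
  2: rewrite hT hQc -addnA leq_add2l addnC leq_add2r; apply: leq_sum => W /andP [hW _]; by rewrite card_gt0 n0.
rewrite (bigID (fun W => W \in R)) /= in hT; rewrite (bigID (fun W => W \in R)) /= in hQc.
have eR : \sum_(W | (W \in Q) && (W != P) && (W \in R)) 1 = #|R|.
  rewrite -sum1_card; apply: eq_bigl => W; rewrite /R !inE.
  case hW: (W \in Q) => //=; case hr: (red_edge e P W); rewrite ?andbF ?andbT //.
  by case/and3P: hr; rewrite eq_sym.
have eR2 : \sum_(W | (W \in Q) && (W != P) && (W \in R)) #|W| = \sum_(W in R) #|W|.
  apply: eq_bigl => W; rewrite /R !inE.
  case hW: (W \in Q) => //=; case hr: (red_edge e P W); rewrite ?andbF ?andbT //.
  by case/and3P: hr; rewrite eq_sym.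
have ge2 : \sum_(W | (W \in Q) && (W != P) && (W \notin R)) 1 <=
           \sum_(W | (W \in Q) && (W != P) && (W \notin R)) #|W|.
  by apply: leq_sum => W /andP [/andP [hW _] _]; rewrite card_gt0 n0.
have cov : #|mixed P a b c| <= \sum_(W in R) #|W|.
  apply: leq_trans (leq_card_cover R).
  apply: subset_leq_card; apply/subsetP => x; rewrite inE => /andP [xP /andP [h1 h2]].
  have : x \in cover Q by rewrite (cover_partition hQ) inE.
  case/bigcupP => W WQ xW.
  apply/bigcupP; exists W => //.
  rewrite /R inE WQ /= /red_edge.
  apply/and3P; split.
  - by apply: contraNneq xP => ->.
  - have [u uP eux] : exists2 u, u \in P & e u x.
      by case/or3P: h1 => h; [exists a | exists b | exists c].
    by apply/existsP; exists u; rewrite uP /=; apply/existsP; exists x; rewrite xW.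
  - have [u uP eux] : exists2 u, u \in P & ~~ e u x.
      move: h2; case ea: (e a x); last by exists a; rewrite ?ea.
      case eb: (e b x); last by exists b; rewrite ?eb.
      case ec: (e c x); last by exists c; rewrite ?ec.
      by [].
    by apply/existsP; exists u; rewrite uP /=; apply/existsP; exists x; rewrite xW.
rewrite /red_deg -/R hT hQc eR2 eR.
set S1 := (X in _ + _ + (1 + (_ + X)) <= _).
set S2 := (X in _ <= _ + (_ + X) + _ + 1).
have ge3 : S1 <= S2.
  by rewrite /S1 /S2; apply: leq_sum => W /andP [/andP [hW _] _]; rewrite card_gt0 n0.
lia.
Qed.
End G.

Lemma Ps_inv (T : finType) (Ps : nat -> {set {set T}}) k : partial_contraction_seq Ps k ->
  forall i, k <= i -> i <= #|T| -> partition (Ps i) [set: T] /\ #|Ps i| = i.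
Proof.
case=> hk [h0 hs].
suff H : forall j, j <= #|T| - k ->
    partition (Ps (#|T| - j)) [set: T] /\ #|Ps (#|T| - j)| = #|T| - j.
  move=> i ki iT; have := H (#|T| - i); rewrite subKn //; apply; lia.
elim=> [_|j IH hj]; first by rewrite subn0 h0; exact: singletons_partition.
have [hp hc] := IH (ltnW hj).
have e1 : (#|T| - j.+1).+1 = #|T| - j by lia.
have := hs (#|T| - j.+1) ltac:(lia) ltac:(lia); rewrite e1.
case=> U [W [hU hW hUW ->]].
have [p2 c2] := merge_partition hp hU hW hUW.
split => //; rewrite c2 hc; lia.
Qed.

Theorem mainTheorem17 (T : finType) (e : rel T) (n d lam mu : nat)
  (Ps : nat -> {set {set T}}) (k : nat) :
  simple_graph e ->
  strongly_regular e n d lam mu ->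
  2 <= n ->
  partial_contraction_seq Ps k ->
  width_le e Ps k (lb1 e) ->
  forall i, k <= i -> i <= n -> n - uphalf (lb1 e) <= i ->
  forall U, U \in Ps i -> #|U| <= 2.
Proof.
move=> [esym eirr] [hn hd _ _] _ hPs hw i ki iN si U hU.
subst n.
have [hp hc] := Ps_inv hPs ki iN.
rewrite leqNgt; apply/negP => U3.
have [a aU] : exists a, a \in U by apply/card_gt0P; lia.
have [b bU] : exists b, b \in U :\ a.
  apply/card_gt0P; move: U3; rewrite (cardsD1 a U) aU; lia.
have [c cU] : exists c, c \in U :\ a :\ b.
  apply/card_gt0P; move: U3; rewrite (cardsD1 a U) aU (cardsD1 b (U :\ a)) bU; lia.
move: bU cU; rewrite !inE => /andP [ba bU] /andP [cb /andP [ca cU]].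
have ab : a != b by rewrite eq_sym.
have ac : a != c by rewrite eq_sym.
have bc : b != c by rewrite eq_sym.
have [c1 c2] := count2 e hp hU aU bU cU.
have h1 := count1 e aU bU cU ab bc ac.
have hr := hw i ki iN U hU.
set L := lb1 e in si hr.
have hu := uphalf_half L; have ho := odd_double_half L.
rewrite -addnn in ho.
move: (odd L) hu ho => o hu ho.
have o1 : o <= 1 by case: o {hu ho}.
have [L3 Lt] := arith3 c2 U3 hc si hu ho o1.
have DB : forall x y, x != y -> 2 * uphalf L <= #|Delta e x y|.
  move=> x y xy; have := lb1_le e xy; rewrite -/L.
  have [q ->] := Delta_even esym eirr x y hd; rewrite hu.
  by apply: arith1.
exact: (arith2 h1 c1 hc si hr Lt (DB _ _ ab) (DB _ _ bc) (DB _ _ ac)).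
Qed.
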